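(* Let $m,n,r$ be positive integers with $r<\min\{m,n\}$ and let $\mathcal{M}=\{X\in\mathbb{R}^{m\times n} : \operatorname{rank}X\le r\}$. There exists a Zariski-open dense subset $\mathcal{U}$ of $\mathcal{M}$ such that the following holds for every $X^*=[x_1^*\cdots x_n^*]\in\mathcal{U}$ and every choice of permutation matrices $\tilde\Pi_1,\dots,\tilde\Pi_n\in\mathcal{P}_m$: setting $\tilde X=[\tilde\Pi_1x_1^*\cdots\tilde\Pi_nx_n^*]$, we have $\operatorname{rank}\underline{\pi}(\tilde X)\ge r$ for every $\underline{\pi}=(\Pi_1,\dots,\Pi_n)\in\mathcal{P}_m^n$, with equality if and only if $\underline{\pi}(\tilde X)=\Pi X^*$ for some $\Pi\in\mathcal{P}_m$.
   Context: $\mathcal{P}_m$ denotes the set of $m\times m$ permutation matrices and $\mathcal{P}_m^n=\prod_{j\in[n]}\mathcal{P}_m$ ($n$ ordered copies). For $\underline{\pi}=(\Pi_1,\dots,\Pi_n)\in\mathcal{P}_m^n$ and a matrix $Y=[y_1\cdots y_n]$ with columns $y_j$, $\underline{\pi}(Y)=[\Pi_1y_1\cdots\Pi_ny_n]$. $\mathcal{M}$ is the real algebraic variety defined by the vanishing of all $(r+1)\times(r+1)$ minors, equipped with the Zariski topology (closed sets are algebraic subvarieties of $\mathcal{M}$). *)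

(* Defs.v *)
From HB Require Import structures.
From mathcomp Require Import all_boot all_order all_algebra all_fingroup.
From mathcomp Require Import reals.
From mathcomp Require mpoly.
Set Implicit Arguments. Unset Strict Implicit. Unset Printing Implicit Defensive.
Import GRing.Theory Num.Theory.
Local Open Scope ring_scope.

Definition mxpoly_eval (R : realType) (m n : nat)
  (p : mpoly.mpoly (m * n) R) (X : 'M[R]_(m, n)) : R :=
  mpoly.meval (fun k : 'I_(m * n) => mxvec X 0 k) p.

Definition lowrank (R : realType) (m n r : nat) (X : 'M[R]_(m, n)) : Prop :=
  (\rank X <= r)%N.

Definition zariski_closed_in (R : realType) (m n : nat)
  (V Z : 'M[R]_(m, n) -> Prop) : Prop :=
  exists S : mpoly.mpoly (m * n) R -> Prop,
    forall X, Z X <-> (V X /\ forall p, S p -> mxpoly_eval p X = 0).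

Definition zariski_open_in (R : realType) (m n : nat)
  (V U : 'M[R]_(m, n) -> Prop) : Prop :=
  (forall X, U X -> V X) /\
  zariski_closed_in V (fun X => V X /\ ~ U X).

Definition zariski_dense_in (R : realType) (m n : nat)
  (V U : 'M[R]_(m, n) -> Prop) : Prop :=
  forall Z, zariski_closed_in V Z -> (forall X, U X -> Z X) -> forall X, V X -> Z X.

Definition permcols (R : realType) (m n : nat) (p : 'I_n -> 'S_m)
  (Y : 'M[R]_(m, n)) : 'M[R]_(m, n) :=
  \matrix_(i < m, j < n) (perm_mx (p j) *m col j Y) i 0.

(* Main.v *)
Require Import Defs.
From HB Require Import structures.
From mathcomp Require Import all_boot all_order all_algebra all_fingroup.
From mathcomp Require Import reals.
From mathcomp Require Import mpoly.
From mathcomp Require Import lra.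
From Stdlib Require Import Classical.
Import GRing.Theory Num.Theory.
Local Open Scope ring_scope.

Section Aux.
Variable R : realType.

Lemma factor_lr (m n r : nat) (X : 'M[R]_(m, n)) :
  (\rank X <= r)%N -> exists A : 'M[R]_(m, r), exists B : 'M[R]_(r, n), X = A *m B.
Proof.
move=> hr.
exists (col_ebase X *m pid_mx (\rank X)), (pid_mx (\rank X) *m row_ebase X).
rewrite mulmxA -(mulmxA (col_ebase X)) mul_pid_mx minnn (minn_idPr hr).
by rewrite mulmx_ebase.
Qed.

Lemma lr_mul (m n r : nat) (A : 'M[R]_(m, r)) (B : 'M[R]_(r, n)) :
  (\rank (A *m B) <= r)%N.
Proof. exact: leq_trans (mxrankM_maxl _ _) (rank_leq_col A). Qed.

Lemma poly_allroots (p : {poly R}) : (forall t, p.[t] = 0) -> p = 0.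
Proof.
move=> h; apply/eqP; apply/negPn/negP => pn0.
have := max_poly_roots pn0 (rs := [seq i%:R | i <- iota 0 (size p)]).
rewrite size_map size_iota ltnn.
have -> : all (root p) [seq i%:R | i <- iota 0 (size p)].
  by apply/allP => x /mapP [i _ ->]; apply/rootP; apply: h.
have -> : uniq [seq i%:R : R | i <- iota 0 (size p)].
  rewrite map_inj_uniq ?iota_uniq //.
  by move=> i j /eqP; rewrite eqr_nat => /eqP.
by move/(_ isT isT).
Qed.

Lemma mmap_horner (N : nat) (h : 'I_N -> {poly R}) (F : {mpoly R[N]}) t :
  (mmap polyC h F).[t] = meval (fun i => (h i).[t]) F.
Proof.
rewrite mevalE /mmap horner_sum; apply: eq_bigr => mm _.
rewrite hornerCM /mmap1 horner_prod; congr (_ * _).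
by apply: eq_bigr => i _; rewrite horner_exp.
Qed.


Lemma lineL (m n r : nat) (F G : {mpoly R[m * n]}) :
  (forall X : 'M[R]_(m, n), (\rank X <= r)%N -> mxpoly_eval F X * mxpoly_eval G X = 0) ->
  (exists X0 : 'M[R]_(m, n), (\rank X0 <= r)%N /\ mxpoly_eval G X0 != 0) ->
  forall X : 'M[R]_(m, n), (\rank X <= r)%N -> mxpoly_eval F X = 0.
Proof.
move=> hFG [X0 [hX0 hG]] X hX.
have [A0 [B0 eX0]] := factor_lr _ _ _ _ hX0.
have [A1 [B1 eX1]] := factor_lr _ _ _ _ hX.
pose Ap : 'M[{poly R}]_(m, r) := map_mx polyC A0 + 'X *: map_mx polyC (A1 - A0).
pose Bp : 'M[{poly R}]_(r, n) := map_mx polyC B0 + 'X *: map_mx polyC (B1 - B0).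
pose Xt t := (A0 + t *: (A1 - A0)) *m (B0 + t *: (B1 - B0)).
have hXp t : map_mx (horner_eval t) (Ap *m Bp) = Xt t.
  apply/matrixP => i j; rewrite !mxE rmorph_sum; apply: eq_bigr => l _.
  by rewrite !mxE !rmorphM !rmorphD !rmorphM /= !horner_evalE !hornerE.
pose hk k := mxvec (Ap *m Bp) 0 k.
have hev (H : {mpoly R[m * n]}) (t : R) : (mmap polyC hk H).[t] = mxpoly_eval H (Xt t).
  rewrite mmap_horner /mxpoly_eval; apply: meval_eq => k.
  by rewrite /hk -(hXp t) -map_mxvec mxE.
pose Fp := mmap polyC hk F; pose Gp := mmap polyC hk G.
have e0 : Fp * Gp = 0.
  apply: poly_allroots => t; rewrite hornerM !hev; apply: hFG; exact: lr_mul.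
have Gn0 : Gp != 0.
  apply: contraNneq hG => G0.
  have -> : X0 = Xt 0 by rewrite /Xt !scale0r !addr0.
  by rewrite -hev -/Gp G0 horner0.
move: e0 => /eqP; rewrite mulf_eq0 (negPf Gn0) orbF => /eqP F0.
have -> : X = Xt 1 by rewrite /Xt !scale1r [A0 + _]addrC subrK [B0 + _]addrC subrK.
by rewrite -hev -/Fp F0 horner0.
Qed.


Definition pc (T : Type) (m n : nat) (tau : 'I_n -> 'S_m) (M : 'M[T]_(m, n)) : 'M[T]_(m, n) :=
  \matrix_(i < m, j < n) M (tau j i) j.
Arguments pc {T m n}.

Definition hk (T : comNzRingType) (m n k : nat) (tau : 'I_n -> 'S_m) (M : 'M[T]_(m, n)) : T :=
  \sum_(f : {ffun 'I_k -> 'I_m}) \sum_(g : {ffun 'I_k -> 'I_n})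
     (\det (mxsub (fun i => f i) (fun i => g i) (pc tau M))) ^+ 2.
Arguments hk {T m n}.

Lemma hk_map (S T : comNzRingType) (phi : {rmorphism S -> T}) (m n k : nat)
  (tau : 'I_n -> 'S_m) (M : 'M[S]_(m, n)) :
  phi (hk k tau M) = hk k tau (map_mx phi M).
Proof.
rewrite /hk rmorph_sum; apply: eq_bigr => f _; rewrite rmorph_sum; apply: eq_bigr => g _.
rewrite rmorphXn -det_map_mx map_mxsub; congr (\det (mxsub _ _ _) ^+ 2).
by apply/matrixP => i j; rewrite !mxE.
Qed.

Lemma permcolsE (m n : nat) (tau : 'I_n -> 'S_m) (Y : 'M[R]_(m, n)) :
  permcols tau Y = pc tau Y.
Proof.
by apply/matrixP => i j; rewrite [LHS]mxE -row_permE !mxE.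
Qed.

Lemma pc_comp (m n : nat) (p pt : 'I_n -> 'S_m) (Y : 'M[R]_(m, n)) :
  permcols p (permcols pt Y) = pc (fun j => p j * pt j)%g Y.
Proof.
by apply/matrixP => i j; rewrite !permcolsE !mxE permM.
Qed.

Lemma rank_mxsub (m n k l : nat) (f : 'I_k -> 'I_m) (g : 'I_l -> 'I_n) (M : 'M[R]_(m, n)) :
  (\rank (mxsub f g M) <= \rank M)%N.
Proof.
rewrite mxsubcr -mxrank_tr trmx_mxsub.
have -> : mxsub g id (rowsub f M)^T = rowsub g (rowsub f M)^T by [].
apply: leq_trans (mxrankS (rowsub_sub _ _)) _.
by rewrite mxrank_tr; apply: mxrankS (rowsub_sub _ _).
Qed.

Lemma hk_rank (m n k : nat) (tau : 'I_n -> 'S_m) (M : 'M[R]_(m, n)) :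
  hk k tau M != 0 -> (k <= \rank (pc tau M))%N.
Proof.
move=> h.
have [f hf] : exists f : {ffun 'I_k -> 'I_m},
    \sum_(g : {ffun 'I_k -> 'I_n}) (\det (mxsub (fun i => f i) (fun i => g i) (pc tau M))) ^+ 2 != 0.
  apply/existsP; apply: contraNT h => /existsPn hn.
  by rewrite /hk big1 // => f _; apply/eqP; have := hn f; rewrite negbK.
have [g hg] : exists g : {ffun 'I_k -> 'I_n}, (\det (mxsub (fun i => f i) (fun i => g i) (pc tau M))) ^+ 2 != 0.
  apply/existsP; apply: contraNT hf => /existsPn hn.
  by rewrite big1 // => g _; apply/eqP; have := hn g; rewrite negbK.
have hu : mxsub (fun i => f i) (fun i => g i) (pc tau M) \in unitmx.
  by rewrite unitmxE unitfE; apply: contra hg => /eqP ->; rewrite expr0n.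
by rewrite -{1}(mxrank_unit hu) rank_mxsub.
Qed.

Lemma hk_pos (m n k : nat) (tau : 'I_n -> 'S_m) (M : 'M[R]_(m, n))
  (f : {ffun 'I_k -> 'I_m}) (g : {ffun 'I_k -> 'I_n}) :
  \det (mxsub (fun i => f i) (fun i => g i) (pc tau M)) != 0 -> hk k tau M != 0.
Proof.
move=> hd; rewrite /hk (bigD1 f) //= (bigD1 g) //=.
set a := _ ^+ 2; set b := \sum_(_ | _) _; set c := \sum_(_ | _) _.
have ha : 0 < a by rewrite /a exprn_even_gt0.
have hb : 0 <= b by apply: sumr_ge0 => *; apply: sqr_ge0.
have hc : 0 <= c by apply: sumr_ge0 => *; apply: sumr_ge0 => *; apply: sqr_ge0.
apply/eqP => h0; lra.
Qed.

Definition Xp (m n : nat) : 'M[{mpoly R[m * n]}]_(m, n) :=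
  \matrix_(i < m, j < n) 'X_(mxvec_index i j).

Lemma ev_hk (m n k : nat) (tau : 'I_n -> 'S_m) (X : 'M[R]_(m, n)) :
  mxpoly_eval (hk k tau (Xp m n)) X = hk k tau X.
Proof.
rewrite /mxpoly_eval hk_map; congr (hk _ _ _).
by apply/matrixP => i j; rewrite !mxE /= mevalXU mxvecE.
Qed.


Lemma witness (m n r k : nat) (tau : 'I_n -> 'S_m) (f : 'I_k -> 'I_m) (g : 'I_k -> 'I_n)
  (c : 'I_k -> 'I_r) (d : 'I_r -> 'I_k) :
  injective f -> injective g ->
  (forall l, tau (g (d (c l))) (f (d (c l))) = tau (g l) (f l)) ->
  exists X : 'M[R]_(m, n), (\rank X <= r)%N /\ hk k tau X != 0.
Proof.
move=> finj ginj hcd.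
pose A : 'M[R]_(m, r) := \matrix_(i, x) (i == tau (g (d x)) (f (d x)))%:R.
pose B : 'M[R]_(r, n) := \matrix_(x, b) ([exists l, (g l == b) && (c l == x)])%:R.
exists (A *m B); split; first exact: lr_mul.
apply: (@hk_pos _ _ _ _ _ [ffun l => f l] [ffun l => g l]).
have -> : mxsub (fun i => [ffun l => f l] i) (fun i => [ffun l => g l] i) (pc tau (A *m B)) = 1%:M.
  apply/matrixP => l l'; rewrite !mxE !ffunE.
  have hB x : B x (g l') = (c l' == x)%:R.
    rewrite /B mxE; congr (_%:R); congr (nat_of_bool _).
    apply/idP/idP => [/existsP [l0 /andP[/eqP /ginj -> //]] | e].
    by apply/existsP; exists l'; rewrite eqxx.
  rewrite (bigD1 (c l')) //= big1 ?addr0 => [|x hx]; last first.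
    by rewrite hB eq_sym (negPf hx) mulr0.
  rewrite hB eqxx mulr1 mxE hcd (inj_eq perm_inj) (inj_eq finj).
  done.
by rewrite det1 oner_neq0.
Qed.


Lemma inj2 (N K : nat) (i0 i1 : 'I_K) (a b : 'I_N) :
  val i0 = 0%N -> val i1 = 1%N -> a != b -> (K <= N)%N ->
  exists f : 'I_K -> 'I_N, injective f /\ f i0 = a /\ f i1 = b.
Proof.
move=> v0 v1 ab KN.
have N1 : (1 < N)%N by apply: leq_trans KN; rewrite -v1 ltn_ord.
pose z0 : 'I_N := Ordinal (ltnW N1).
pose z1 : 'I_N := Ordinal N1.
pose s1 := tperm z0 a; pose b' := s1 b; pose s2 := tperm z1 b'.
exists (fun l => s1 (s2 (widen_ord KN l))); split.
  by move=> x y /perm_inj /perm_inj /(congr1 val) /= /val_inj.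
have w0 : widen_ord KN i0 = z0 by apply: val_inj; rewrite /= v0.
have w1 : widen_ord KN i1 = z1 by apply: val_inj; rewrite /= v1.
rewrite w0 w1 /s2 tpermL /b' /s1 tpermK; split => //.
rewrite [tperm z1 _ z0]tpermD ?tpermL //.
apply/eqP => e; have := tpermK z0 a b; rewrite [tperm z0 a b]e tpermL => eba.
by move: ab; rewrite eba eqxx.
Qed.


Lemma wit_r (m n r : nat) : (r <= m)%N -> (r <= n)%N ->
  exists X : 'M[R]_(m, n), (\rank X <= r)%N /\ hk r (fun _ => 1%g) X != 0.
Proof.
move=> rm rn.
apply: (@witness m n r r (fun _ => 1%g) (widen_ord rm) (widen_ord rn) id id) => //.
  by move=> x y /(congr1 val) /= /val_inj.
by move=> x y /(congr1 val) /= /val_inj.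
Qed.

Lemma wit_nc (m n r : nat) (tau : 'I_n -> 'S_m) (j k : 'I_n) :
  (0 < r)%N -> (r < m)%N -> (r < n)%N -> tau j != tau k ->
  exists X : 'M[R]_(m, n), (\rank X <= r)%N /\ hk r.+1 tau X != 0.
Proof.
move=> r0 rm rn hjk.
have [x hx] : exists x, tau j x != tau k x.
  apply/existsP; apply: contraNT hjk => /existsPn hn; apply/eqP/permP => x.
  by apply/eqP; have := hn x; rewrite negbK.
pose y := (tau k)^-1%g (tau j x).
have ky : tau k y = tau j x by rewrite /y permKV.
have xy : x != y by apply/eqP => e; move: hx; rewrite -ky -e eqxx.
have jk : j != k by apply: contraNneq hjk => ->.
have v1 : val (inord 1 : 'I_r.+1) = 1%N by rewrite /= inordK.
have [f [finj [f0 f1]]] := @inj2 m r.+1 ord0 (inord 1) x y erefl v1 xy rm.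
have [g [ginj [g0 g1]]] := @inj2 n r.+1 ord0 (inord 1) j k erefl v1 jk rn.
have cpf (l : 'I_r.+1) : (l.-1 < r)%N.
  by case: l => [[|l] /= hl] //; rewrite -ltnS.
pose c (l : 'I_r.+1) : 'I_r := Ordinal (cpf l).
pose d (x : 'I_r) : 'I_r.+1 := lift ord0 x.
apply: (@witness m n r r.+1 tau f g c d finj ginj) => l.
have [l0|lpos] := posnP l.
  have -> : l = ord0 by apply: val_inj.
  have -> : d (c ord0) = inord 1 by apply: val_inj; rewrite v1.
  by rewrite f0 f1 g0 g1 ky.
have -> // : d (c l) = l.
by apply: val_inj; rewrite /= /bump /= add1n prednK.
Qed.


Lemma pc1 (m n : nat) (M : 'M[R]_(m, n)) : pc (fun _ => 1%g) M = M.
Proof. by apply/matrixP => i j; rewrite mxE perm1. Qed.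

Lemma pc_const (m n : nat) (s : 'S_m) (M : 'M[R]_(m, n)) :
  pc (fun _ => s) M = perm_mx s *m M.
Proof. by rewrite -row_permE; apply/matrixP => i j; rewrite !mxE. Qed.

Lemma rank_perm_le (m n : nat) (s : 'S_m) (M : 'M[R]_(m, n)) :
  (\rank (perm_mx s *m M) <= \rank M)%N.
Proof. by rewrite -row_permE row_permEsub; apply: mxrankS (rowsub_sub _ _). Qed.

Lemma rank_perm_mul (m n : nat) (s : 'S_m) (M : 'M[R]_(m, n)) :
  \rank (perm_mx s *m M) = \rank M.
Proof.
apply/eqP; rewrite eqn_leq rank_perm_le /=.
have {1}-> : M = perm_mx s^-1 *m (perm_mx s *m M).
  by rewrite mulmxA -perm_mxM mulVg perm_mx1 mul1mx.
exact: rank_perm_le.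
Qed.

End Aux.
Arguments pc {T m n}.
Arguments hk {T m n}.
Arguments hk_rank {R m n k tau M}.
Arguments pc1 {R m n}.
Arguments pc_const {R m n}.
Arguments rank_perm_mul {R m n}.
Arguments ev_hk {R m n k}.

Theorem theorem1 (R : realType) (m n r : nat) :
  (0 < m)%N -> (0 < n)%N -> (0 < r)%N -> (r < minn m n)%N ->
  exists U : 'M[R]_(m, n) -> Prop,
    zariski_open_in (@lowrank R m n r) U /\
    zariski_dense_in (@lowrank R m n r) U /\
    forall Xs : 'M[R]_(m, n), U Xs ->
    forall pt : 'I_n -> 'S_m,
    forall p : 'I_n -> 'S_m,
      (r <= \rank (permcols p (permcols pt Xs)))%N /\
      (\rank (permcols p (permcols pt Xs)) = r <->
         exists s : 'S_m, permcols p (permcols pt Xs) = perm_mx s *m Xs).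
Proof.
move=> m0 n0 r0; rewrite leq_min => /andP [rm rn].
pose NC (tau : {ffun 'I_n -> 'S_m}) := [exists j, exists k, tau j != tau k].
pose P : {mpoly R[m * n]} := hk r (fun _ => 1%g) (Xp R m n) *
  \prod_(tau | NC tau) hk r.+1 (fun j => tau j) (Xp R m n).
pose Q := fun q : {mpoly R[m * n]} => exists X0, (\rank X0 <= r)%N /\ mxpoly_eval q X0 != 0.
have Qmul q1 q2 : Q q1 -> Q q2 -> Q (q1 * q2).
  move=> [X1 [v1 h1]] Q2; apply: NNPP => nQ.
  have hz : forall X : 'M[R]_(m, n), (\rank X <= r)%N ->
      mxpoly_eval q1 X * mxpoly_eval q2 X = 0.
    move=> X vX; case: (eqVneq (mxpoly_eval (q1 * q2) X) 0) => [|hne].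
      by rewrite /mxpoly_eval mevalM.
    by exfalso; apply: nQ; exists X.
  by move: h1; rewrite (@lineL R m n r q1 q2 hz Q2 X1 v1) eqxx.
have QP : Q P.
  apply: (Qmul).
    have [X [vX hX]] := @wit_r R m n r (ltnW rm) (ltnW rn).
    by exists X; split => //; rewrite ev_hk.
  apply: (big_ind Q) => //.
    by exists 0; rewrite mxrank0 /mxpoly_eval meval1 oner_neq0.
  move=> tau /existsP [j /existsP [k hjk]].
  have [X [vX hX]] := @wit_nc R m n r (fun j => tau j) j k r0 rm rn hjk.
  by exists X; split => //; rewrite ev_hk.
exists (fun X => (\rank X <= r)%N /\ mxpoly_eval P X != 0).
split; [split|split].
- by move=> X [].
- exists (fun q => q = P) => X; split => [[vX nU]|[vX h]].
    split => // q ->.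
    case: (eqVneq (mxpoly_eval P X) 0) => // hne.
    by exfalso; exact: nU (conj vX hne).
  by split => // [[_ hn]]; move: hn; rewrite h // eqxx.
- move=> Z [S hZ] hUZ X vX; apply/hZ; split => // q Sq.
  apply: (@lineL R m n r q P) => // Y vY.
  case: (eqVneq (mxpoly_eval P Y) 0) => [->|hne]; first by rewrite mulr0.
  have [_ h] := proj1 (hZ Y) (hUZ Y (conj vY hne)).
  by rewrite h // mul0r.
move=> Xs [vXs hP] pt p.
rewrite pc_comp; set tau := (fun j => (p j * pt j)%g).
move: hP; rewrite /mxpoly_eval rmorphM rmorph_prod mulf_eq0 negb_or => /andP [h1 h2].
have hr : (r <= \rank Xs)%N.
  by rewrite -{1}(pc1 Xs); apply: hk_rank; rewrite -ev_hk; exact: h1.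
case: (boolP (NC [ffun j => tau j])) => hnc.
  have h3 : hk r.+1 (fun j => [ffun j => tau j] j) Xs != 0.
    rewrite -ev_hk; move/prodf_neq0: h2; exact.
  have h4 := hk_rank h3.
  have e : pc (fun j => [ffun j => tau j] j) Xs = pc tau Xs.
    by apply/matrixP => i j; rewrite !mxE ffunE.
  rewrite e in h4; split; first exact: ltnW.
  split => [er|[s es]]; first by move: h4; rewrite er ltnn.
  by move: h4; rewrite es rank_perm_mul ltnNge vXs.
have htau : forall j, tau j = tau (Ordinal n0).
  move=> j; apply/eqP; apply: contraNT hnc => hne.
  by apply/existsP; exists j; apply/existsP; exists (Ordinal n0); rewrite !ffunE.
have e : pc tau Xs = perm_mx (tau (Ordinal n0)) *m Xs.
  by rewrite -pc_const; apply/matrixP => i j; rewrite !mxE htau.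
rewrite e rank_perm_mul; have rX : \rank Xs = r by apply/eqP; rewrite eqn_leq vXs hr.
by split => //; split => // _; exists (tau (Ordinal n0)).
Qed.
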